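(* Let $(D,v^* )$ be a neighbor-acyclic instance of TFP (so $|V(D)|$ is a power of two) such that $D$ has no source. Let $A=N_{\mathrm{out}}(v^* )$ and $B=N_{\mathrm{in}}(v^* )$. If (1) $|A|\ge |V(D)|/3$ and (2) for every $b\in B$, $\mathrm{out}(b)\le \frac{|B|}{|A|}\,\mathrm{out}(v^* )$ (equivalently $\mathrm{out}(b)\le |B|$), then $(D,v^* )$ is a yes-instance.
   Context: A tournament is a digraph with exactly one arc between every pair of distinct vertices; $(u,v)$ means $u$ beats $v$. TFP: given a tournament $D$ with $|V(D)|$ a power of two and a player $v^*$, decide whether there is a seeding of a balanced knockout tournament (complete binary tree with $|V(D)|$ leaves, in each round sibling winners play and the winner according to $D$ advances) under which $v^*$ is the champion; if so the instance is a yes-instance. $\mathrm{out}(v)=|N_{\mathrm{out}}(v)|$ is the out-degree in $D$. An instance $(D,v^* )$ is neighbor-acyclic if $D[N_{\mathrm{in}}(v^* )]$ and $D[N_{\mathrm{out}}(v^* )]$ are both acyclic. A source is a vertex of in-degree $0$. *)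

(* Defs.v *)
From mathcomp Require Import all_boot.
Set Implicit Arguments. Unset Strict Implicit. Unset Printing Implicit Defensive.

Section Tournament.
Variable T : finType.
Variable beats : rel T.   (* beats u v  <->  arc (u,v): u beats v *)

Definition tournament : Prop :=
  (forall u, ~~ beats u u) /\
  (forall u v, u != v -> beats u v (+) beats v u).

Definition match_winner (a b : T) : T := if beats a b then a else b.

Fixpoint knockout_round (s : seq T) : seq T :=
  match s with
  | a :: b :: r => match_winner a b :: knockout_round r
  | _ => s
  end.

(* A seeding is an ordering s of all players (the leaves of the complete
   binary tree, left to right); after k rounds (|V| = 2^k) one champion
   remains. *)
Definition is_seeding (s : seq T) : Prop := perm_eq s (enum T).

Definition champion_under (k : nat) (s : seq T) (v : T) : Prop :=
  iter k knockout_round s = [:: v].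

Definition yes_instance (k : nat) (v : T) : Prop :=
  exists s : seq T, is_seeding s /\ champion_under k s v.

Definition out_nbhd (v : T) : {set T} := [set u | beats v u].
Definition in_nbhd (v : T) : {set T} := [set u | beats u v].
Definition outdeg (v : T) : nat := #|out_nbhd v|.

Definition acyclic_on (A : {set T}) : Prop :=
  forall (x : T) (p : seq T), x \in A -> all (fun y => y \in A) p ->
    ~~ cycle beats (x :: p).

Definition neighbor_acyclic (v : T) : Prop :=
  acyclic_on (in_nbhd v) /\ acyclic_on (out_nbhd v).

Definition is_source (v : T) : Prop := forall u, ~~ beats u v.

End Tournament.

(* Main.v *)
Require Import Defs.
From mathcomp Require Import all_boot zify.
Set Implicit Arguments. Unset Strict Implicit. Unset Printing Implicit Defensive.

Lemma ar_hMA X Y a i r m p : 0 < m -> X <= 1 + (r - (m - p)) -> Y + a = p -> i + r <= m - 1 -> a <= i -> m - p <= r -> X <= Y.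
Proof. lia. Qed.

Lemma ar_R p m t N : p + m + 1 = 2 * N -> 2 * t <= m -> m - 2 * t < p -> t = m - p ->
  p - (1 + (m - 2 * t)) = 2 * (N + t - m - 1).
Proof. lia. Qed.
Lemma ar_U p m t N j : p + m + 1 = 2 * N -> 2 * t <= m -> m - 2 * t < p -> t = m - p ->
  j = N + t - m - 1 -> 2 * t + 2 * (m - 2 * t) + (2 + 2 * j) = 2 * N.
Proof. lia. Qed.
Lemma ar_I p m t N a : p + m + 1 = 2 * N -> 3 * p >= 2 * N -> t = m - p -> 2 <= N ->
  N <= t + 1 + a -> N <= 3 * a.
Proof. lia. Qed.

Section Main.
Variable T : finType.
Variable beats : rel T.
Hypothesis Ht : tournament beats.

Lemma irr u : ~~ beats u u. Proof. by case: Ht. Qed.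
Lemma asym u w : beats u w -> ~~ beats w u.
Proof.
move=> h; case: (eqVneq u w) => [e|ne]; first by subst; rewrite (negbTE (irr w)).
by have := (proj2 Ht) u w ne; rewrite h.
Qed.
Lemma tot u w : u != w -> ~~ beats u w -> beats w u.
Proof. by move=> ne; have := (proj2 Ht) u w ne; case: (beats u w); case: (beats w u). Qed.
Lemma beats_neq u w : beats u w -> u != w.
Proof. by move=> h; apply/eqP => e; subst; rewrite (negbTE (irr w)) in h. Qed.

Definition pairing (W Wp : {set T}) (f : T -> T) :=
  [/\ Wp \subset W, {in Wp &, injective f},
      (forall w, w \in Wp -> f w \in W :\: Wp /\ beats w (f w)) & #|W| = 2 * #|Wp| ].

Lemma knock_flat (f : T -> T) (s : seq T) :
  (forall w, w \in s -> beats w (f w)) ->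
  knockout_round beats (flatten [seq [:: w; f w] | w <- s]) = s.
Proof.
elim: s => [|w s IH] //= H.
rewrite /match_winner H ?mem_head // IH // => x xs; apply: H; by rewrite inE xs orbT.
Qed.

Lemma perm_flat (f : T -> T) (s : seq T) :
  perm_eq (flatten [seq [:: w; f w] | w <- s]) (s ++ map f s).
Proof.
elim: s => [|w s IH] //=.
rewrite perm_cons; apply: (@perm_trans _ (f w :: s ++ map f s)); first by rewrite perm_cons.
by rewrite -cat1s perm_catCA.
Qed.

Lemma pairing_seq W Wp f s' : pairing W Wp f -> perm_eq s' (enum Wp) ->
  perm_eq (flatten [seq [:: w; f w] | w <- s']) (enum W) /\
  knockout_round beats (flatten [seq [:: w; f w] | w <- s']) = s'.
Proof.
case=> sub inj hf card ps.
have mem' x : (x \in s') = (x \in Wp) by rewrite (perm_mem ps) mem_enum.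
split; last by apply: knock_flat => w; rewrite mem' => /hf [].
apply: (perm_trans (perm_flat f s')).
have imE : f @: Wp = W :\: Wp.
  apply/eqP; rewrite eqEcard; apply/andP; split.
    by apply/subsetP => x /imsetP [w wW ->]; case: (hf w wW).
  rewrite card_in_imset // cardsDS //; lia.
apply: uniq_perm.
- rewrite cat_uniq (perm_uniq ps) enum_uniq /=; apply/andP; split.
    apply/hasPn => x /mapP [w ws ->]; rewrite mem' ; move: ws; rewrite mem' => /hf [].
    by rewrite inE => /andP [].
  rewrite map_inj_in_uniq ?(perm_uniq ps) ?enum_uniq // => x y; rewrite !mem'; exact: inj.
- exact: enum_uniq.
move=> x; rewrite mem_enum mem_cat mem'.
case xW: (x \in Wp); first by rewrite (subsetP sub).
have : (x \in W) = (x \in W :\: Wp) by rewrite inE xW.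
move=> ->; rewrite -imE; apply/mapP/imsetP => [[w ws ->]|[w ws ->]]; exists w => //.
  by rewrite -mem'. by rewrite mem'.
Qed.


Lemma card_disjU (A B : {set T}) : (forall x, x \in A -> x \notin B) ->
  #|A :|: B| = #|A| + #|B|.
Proof.
move=> d; rewrite cardsU; suff -> : A :&: B = set0 by rewrite cards0 subn0.
apply/setP => x; rewrite !inE; apply/negbTE; apply/negP => /andP [xa xb].
by move: (d x xa); rewrite xb.
Qed.

Lemma pairingU W1 W2 P1 P2 f1 f2 : pairing W1 P1 f1 -> pairing W2 P2 f2 ->
  (forall x, x \in W1 -> x \notin W2) ->
  pairing (W1 :|: W2) (P1 :|: P2) (fun x => if x \in P1 then f1 x else f2 x).
Proof.
case=> s1 i1 h1 c1 [s2 i2 h2 c2] d.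
have d' x : x \in P1 -> x \notin P2.
  move=> xp; apply/negP => xp2; by move: (d x (subsetP s1 x xp)); rewrite (subsetP s2 x xp2).
split.
- exact: setUSS.
- move=> x y; rewrite !inE => /orP [xp|xp] /orP [yp|yp].
  + by rewrite xp yp; apply: i1.
  + rewrite xp; case: ifP => [yp1|_]; first by apply: i1.
    move=> e; case: (h1 x xp); rewrite e inE => /andP [_ fW] _.
    by case: (h2 y yp); rewrite inE => /andP [_ fW2] _; move: (d _ fW); rewrite fW2.
  + rewrite yp; case: ifP => [xp1|_]; first by apply: i1.
    move=> e; case: (h1 y yp); rewrite -e inE => /andP [_ fW] _.
    by case: (h2 x xp); rewrite inE => /andP [_ fW2] _; move: (d _ fW); rewrite fW2.
  + case: ifP => xp1; case: ifP => yp1.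
    * by apply: i1.
    * by move: (d' _ xp1); rewrite xp.
    * by move: (d' _ yp1); rewrite yp.
    * by apply: i2.
- move=> w; rewrite inE => /orP [wp|wp].
  + rewrite wp; case: (h1 w wp) => /setDP [fW fP] b; split=> //.
    rewrite !inE fW /= negb_or fP /= ?andbT; apply/negP => fp2.
    by move: (d _ fW); rewrite (subsetP s2 _ fp2).
  + have wp1 : w \in P1 = false by apply/negbTE/negP => wp1; move: (d' _ wp1); rewrite wp.
    rewrite wp1; case: (h2 w wp) => /setDP [fW fP] b; split=> //.
    rewrite !inE fW orbT /= negb_or fP /= ?andbT; apply/negP => fp1.
    by move: (d _ (subsetP s1 _ fp1)); rewrite fW.
- rewrite card_disjU // card_disjU // c1 c2; lia.
Qed.

Lemma pairing2 a b : beats a b -> pairing [set a; b] [set a] (fun _ => b).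
Proof.
move=> h; have ne := beats_neq h; split.
- by apply/subsetP => x; rewrite !inE => ->.
- by move=> x y; rewrite !inE => /eqP -> /eqP ->.
- move=> w; rewrite inE => /eqP ->; split=> //; by rewrite !inE eq_refl orbT eq_sym ne.
- by rewrite cards2 cards1 ne.
Qed.

Lemma pairing0 : pairing set0 set0 id.
Proof. by split; rewrite ?cards0 ?sub0set // => x; rewrite inE. Qed.

Lemma even_pairing n (R : {set T}) : #|R| = 2 * n -> exists (Q : {set T}) (f : T -> T), Q \subset R /\ pairing R Q f.
Proof.
elim: n R => [|n IH] R cR.
  exists set0, id; split; first exact: sub0set.
  by move: cR; rewrite muln0 => /eqP; rewrite cards_eq0 => /eqP ->; exact: pairing0.
have : 0 < #|R| by rewrite cR; lia.
case/card_gt0P => x xR.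
have : 0 < #|R :\ x| by move: cR; rewrite (cardsD1 x) xR; lia.
case/card_gt0P => y; rewrite !inE => /andP [yx yR].
have cR' : #|R :\: [set x; y]| = 2 * n.
  rewrite cardsDS; last by apply/subsetP => z; rewrite !inE => /orP [] /eqP ->.
  by rewrite cards2 eq_sym yx cR; lia.
case: (IH _ cR') => Q [f [sQ pQ]].
have [a [b [E hab]]] : exists a b, [set a; b] = [set x; y] /\ beats a b.
  case bxy: (beats x y); first by exists x, y.
  exists y, x; split; first by rewrite setUC.
  by apply: (tot _ (negbT bxy)); rewrite eq_sym.
have U := pairingU (pairing2 hab) pQ.
have RE : [set a; b] :|: (R :\: [set x; y]) = R.
  apply/setP => z; rewrite E !inE; case: (z == x) /eqP => [->|_]; first by rewrite xR.
  case: (z == y) /eqP => [->|_]; first by rewrite yR. by [].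
have U' : (forall x0, x0 \in [set a; b] -> x0 \notin R :\: [set x; y]).
  move=> z; rewrite E !inE => /orP [] /eqP -> ; by rewrite eq_refl ?orbT.
move: (U U'); rewrite RE => U2; eexists; eexists; split; last apply: U2.
by case: U2.
Qed.

Lemma gm (r : T -> nat) n : forall X Y : {set T}, #|X| = n ->
  (forall x, x \in X -> x \notin Y) ->
  (forall x, x \in X -> #|[set x' in X | r x' <= r x]| <= #|[set y in Y | beats y x]|) ->
  exists (Z : {set T}) (f : T -> T), [/\ Z \subset Y, #|Z| = #|X| & pairing (Z :|: X) Z f].
Proof.
elim: n => [|n IH] X Y cX dXY hX.
  exists set0, id; split; rewrite ?sub0set ?cards0 //.
  move: cX => /eqP; rewrite cards_eq0 => /eqP ->; rewrite setU0; exact: pairing0.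
have : 0 < #|X| by rewrite cX.
case/card_gt0P => x0 x0X.
pose x := [arg max_(i > x0 in X) r i].
have [xX xmax] : x \in X /\ forall j, j \in X -> r j <= r x.
  by rewrite /x; case: arg_maxnP => // i iX H; split => // j jX; apply: H.
have cX' : #|X :\ x| = n by move: cX; rewrite (cardsD1 x) xX; lia.
have hX' : forall z, z \in X :\ x ->
   #|[set x' in X :\ x | r x' <= r z]| <= #|[set y in Y | beats y z]|.
  move=> z zX; apply: leq_trans (hX z (subsetP (subD1set X x) z zX)).
  apply: subset_leq_card; apply/subsetP => y; rewrite !inE => /andP [/andP [_ yX] ->].
  by rewrite yX.
have [Z0 [f0 [sZ0 cZ0 [s0 i0 h0 c0]]]] := IH (X :\ x) Y cX'
  (fun z zX => dXY z (subsetP (subD1set X x) z zX)) hX'.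
have : ~~ ([set y in Y | beats y x] \subset Z0).
  apply/negP => /subset_leq_card; move: (hX x xX).
  have -> : [set x' in X | r x' <= r x] = X.
    by apply/setP => z; rewrite inE; case zX: (z \in X) => //=; rewrite xmax.
  rewrite cZ0 cX cX'; lia.
case/subsetPn => y; rewrite inE => /andP [yY byx] yZ0.
have xZ0 : x \notin Z0 by apply/negP => /(subsetP sZ0); apply/negP; apply: dXY.
exists (y |: Z0), (fun z => if z == y then x else f0 z); split.
- by rewrite subUset sub1set yY sZ0.
- by rewrite cardsU1 yZ0 cZ0 cX cX'.
have f0X z : z \in Z0 -> f0 z \in X :\ x.
  by move=> zZ; case: (h0 z zZ) => /setDP [/setUP [h|h] hn] _ //; rewrite h in hn.
split.
- exact: subsetUl.
- move=> a b; rewrite !inE => /orP [/eqP ->|aZ] /orP [/eqP ->|bZ] //.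
  + rewrite eq_refl; case: ifP => [/eqP -> //|_] e.
    by move: (f0X b bZ); rewrite -e !inE eq_refl.
  + rewrite eq_refl; case: ifP => [/eqP -> //|_] e.
    by move: (f0X a aZ); rewrite e !inE eq_refl.
  + case: ifP => [/eqP ea|_]; first by move: yZ0; rewrite -ea aZ.
    case: ifP => [/eqP eb|_]; first by move: yZ0; rewrite -eb bZ.
    exact: i0.
- move=> w; rewrite !inE => /orP [/eqP ->|wZ].
  + rewrite eq_refl; split=> //.
    rewrite xX orbT andbT negb_or xZ0 andbT; apply/negP => /eqP e; move: (dXY x xX); by rewrite e yY.
  + case: ifP => [/eqP e|_]; first by move: yZ0; rewrite -e wZ.
    case: (h0 w wZ) => _ b; split => //.
    have := f0X w wZ; rewrite !inE => /andP [fx fX].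
    rewrite fX !orbT andbT negb_or; apply/andP; split.
      by apply/negP => /eqP e; move: (dXY _ fX); rewrite e yY.
    by apply/negP => /(subsetP sZ0) fY; move: (dXY _ fX); rewrite fY.
- rewrite card_disjU; last by move=> z zZ; apply/negP => zX; move: (dXY z zX); rewrite (subsetP _ z zZ) // subUset sub1set yY sZ0.
  rewrite cardsU1 yZ0 cZ0 cX cX'; lia.
Qed.


Variable v : T.
Let A := out_nbhd beats v.
Let B := in_nbhd beats v.
Hypothesis trB : forall x y z, x \in B -> y \in B -> z \in B -> beats x y -> beats y z -> beats x z.

Definition Inv k (W : {set T}) := [/\ v \in W, #|W| = 2 ^ k,
  (k = 0 \/ #|W| <= 3 * #|W :&: A|) &
  (forall b, b \in W :&: B -> #|W :&: A :&: out_nbhd beats b| <= #|W :&: B :&: in_nbhd beats b|)].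

Lemma vA : v \notin A. Proof. by rewrite inE irr. Qed.
Lemma vB : v \notin B. Proof. by rewrite inE irr. Qed.
Lemma AB x : x \in A -> x \notin B.
Proof. by rewrite !inE => h; apply: asym. Qed.

Lemma round k W : Inv k.+1 W -> exists (W' : {set T}) (f : T -> T), pairing W W' f /\ Inv k W'.
Proof.
case=> vW cW [//|c3] cB.
set WA := W :&: A; set WB := W :&: B.
set p := #|WA|; set m := #|WB|.
have WAA x : x \in WA -> x \in A by rewrite inE => /andP [].
have WBB x : x \in WB -> x \in B by rewrite inE => /andP [].
have WAW x : x \in WA -> x \in W by rewrite inE => /andP [].
have WBW x : x \in WB -> x \in W by rewrite inE => /andP [].
have ABx x : x \in WA -> x \in WB -> False.
  by move=> /WAA xa /WBB xb; move: (AB xa); rewrite xb.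
have cn : #|W| = p + m + 1.
  have e : W = v |: (WA :|: WB).
    apply/setP => x; rewrite !inE; case: (eqVneq x v) => [->|ne] /=; first by rewrite vW.
    case xW: (x \in W) => //=; case bvx: (beats v x) => //=.
    by rewrite (tot _ (negbT bvx)) // eq_sym.
  rewrite e cardsU1 card_disjU; last by move=> x xa; apply/negP => xb; exact: ABx xa xb.
  rewrite !inE vW (negbTE (irr v)) /=; rewrite -/WA -/WB -/p -/m; lia.
set N := 2 ^ k.
have cN : #|W| = 2 * N by rewrite cW expnS.
have N1 : 1 <= N by rewrite expn_gt0.
set t := m - p.
have c3' : #|W| <= 3 * p by exact: c3.
have tE : t = m - p by [].
have ar1 : 2 * t <= m by lia.
have ar2 : m - 2 * t < p by lia.
have [s [us ms ps]] : exists s : seq T, [/\ uniq s, s =i WB & pairwise beats s].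
  pose leT := fun x y : T => (x == y) || beats x y.
  have totT : total leT.
    move=> x y; rewrite /leT; case: (eqVneq x y) => //= ne.
    by case bxy: (beats x y) => //=; rewrite (tot ne (negbT bxy)) ?orbT.
  have trT : {in mem WB & &, transitive leT}.
    move=> y x z yB xB zB; rewrite /leT => /orP [/eqP ->//|bxy] /orP [/eqP <-|byz].
      by rewrite bxy orbT.
    by rewrite (trB (WBB _ xB) (WBB _ yB) (WBB _ zB) bxy byz) orbT.
  exists (sort leT (enum WB)); split.
  - by rewrite sort_uniq enum_uniq.
  - by move=> x; rewrite mem_sort mem_enum.
  have srt := sort_sorted totT (enum WB).
  rewrite (sorted_pairwise_in trT) in srt; last by apply/allP => x; rewrite mem_sort mem_enum.
  have u : uniq (sort leT (enum WB)) by rewrite sort_uniq enum_uniq.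
  rewrite uniq_pairwise in u.
  have := introT andP (conj srt u); rewrite -pairwise_relI.
  apply: sub_pairwise => x y /=; rewrite /leT => /andP [/orP [/eqP ->|//]]; by rewrite eq_refl.
have sz : size s = m by rewrite -(card_uniqP us) -/m; apply: eq_card.
set s1 := take t s; set s23 := drop t s; set s2 := take (m - 2 * t) s23; set s3 := drop (m - 2 * t) s23.
have es : s = s1 ++ s2 ++ s3 by rewrite /s2 /s3 /s1 /s23 !cat_take_drop.
have sz1 : size s1 = t by rewrite size_takel // sz; lia.
have sz23 : size s23 = m - t by rewrite size_drop sz.
have sz2 : size s2 = m - 2 * t by rewrite size_takel // sz23; lia.
have sz3 : size s3 = t by rewrite size_drop sz23; lia.
move: us ms ps; rewrite es => us ms ps.
move: ps; rewrite !pairwise_cat => /and3P [ar12 _ /and3P [ar23 _ _]].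
move: us; rewrite !cat_uniq => /and3P [u1 n1 /and3P [u2 n23 u3]].
have b12 x y : x \in s1 -> y \in s2 -> beats x y.
  by move=> xs ys; apply: (allrelP ar12) => //; rewrite mem_cat ys.
have b13 x y : x \in s1 -> y \in s3 -> beats x y.
  by move=> xs ys; apply: (allrelP ar12) => //; rewrite mem_cat ys orbT.
have b23 x y : x \in s2 -> y \in s3 -> beats x y.
  by move=> xs ys; apply: (allrelP ar23).
have d12 x : x \in s1 -> x \in s2 -> False.
  by move=> h1 h2; move/hasPn: n1 => /(_ x); rewrite mem_cat h2 h1 => /(_ isT).
have d13 x : x \in s1 -> x \in s3 -> False.
  by move=> h1 h2; move/hasPn: n1 => /(_ x); rewrite mem_cat h2 orbT h1 => /(_ isT).
have d23 x : x \in s2 -> x \in s3 -> False.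
  by move=> h1 h2; move/hasPn: n23 => /(_ x); rewrite h2 h1 => /(_ isT).
have mWB x : (x \in WB) = [|| x \in s1, x \in s2 | x \in s3] by rewrite -ms !mem_cat.
set S := [set x in s1]; set M := [set x in s2]; set L := [set x in s3].
have cS : #|S| = t by rewrite cardsE (card_uniqP u1).
have cM : #|M| = m - 2 * t by rewrite cardsE (card_uniqP u2).
have cL : #|L| = t by rewrite cardsE (card_uniqP u3).
have inS x : (x \in S) = (x \in s1) by rewrite inE.
have inM x : (x \in M) = (x \in s2) by rewrite inE.
have inL x : (x \in L) = (x \in s3) by rewrite inE.
have SWB x : x \in s1 -> x \in WB by move=> h; rewrite mWB h.
have MWB x : x \in s2 -> x \in WB by move=> h; rewrite mWB h orbT.
have LWB x : x \in s3 -> x \in WB by move=> h; rewrite mWB h !orbT.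
have dLS : forall x, x \in L -> x \notin S.
  by move=> x; rewrite inS inL => xL; apply/negP => xS; exact: d13 xS xL.
have hLS : forall x, x \in L -> #|[set x' in L | 0 <= 0]| <= #|[set y in S | beats y x]|.
  move=> x; rewrite inL => xL; apply: (@leq_trans #|L|).
    by apply: subset_leq_card; apply/subsetP => y; rewrite inE => /andP [].
  rewrite cL -cS; apply: subset_leq_card; apply/subsetP => y yS; rewrite inE yS /=.
  by apply: b13 => //; rewrite -inS.
have [Z1 [f1 [sZ1 cZ1 P1]]] := @gm (fun _ => 0) _ L S erefl dLS hLS.
have eZ1 : Z1 = S by apply/eqP; rewrite eqEcard sZ1 cZ1 cS cL /=.
rewrite eZ1 in P1.
pose r x := #|WB :&: out_nbhd beats x|.
have dMA : forall x, x \in M -> x \notin WA.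
  by move=> x; rewrite inM => /MWB xb; apply/negP => xa; exact: ABx xa xb.
have hMA : forall x, x \in M -> #|[set x' in M | r x' <= r x]| <= #|[set y in WA | beats y x]|.
  move=> x; rewrite inM => xM.
  have xWB := MWB x xM.
  set O := WB :&: out_nbhd beats x; set I := WB :&: in_nbhd beats x.
  have LO : L \subset O.
    by apply/subsetP => y; rewrite inL => yL; rewrite in_setI (LWB _ yL) inE b23.
  have cLO : t <= r x by rewrite -cL; exact: subset_leq_card.
  have c1 : #|[set x' in M | r x' <= r x]| <= 1 + (r x - t).
    apply: (@leq_trans #|x |: (O :\: L)|); last by rewrite cardsU1 cardsDS // cL; case: (_ \notin _).
    apply: subset_leq_card; apply/subsetP => y; rewrite in_set inM => /andP [yM ryx].
    rewrite in_setU1 in_setD inL.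
    case: (eqVneq y x) => //= ne.
    have yL : y \notin s3 by apply/negP => h; exact: d23 yM h.
    case bxy: (beats x y).
      by rewrite yL in_setI (MWB _ yM) inE bxy.
    exfalso.
    have byx : beats y x by apply: tot _ (negbT bxy); rewrite eq_sym.
    have : #|x |: O| <= r y.
      apply: subset_leq_card; apply/subsetP => z; rewrite in_setU1 in_setI inE => /orP [/eqP ->|/andP [zWB bxz]].
        by apply/andP; split; [exact: xWB | rewrite inE].
      apply/andP; split; first exact: zWB. rewrite inE; apply: (trB (WBB _ (MWB _ yM)) (WBB _ xWB) (WBB _ zWB) byx); by move: bxz; rewrite inE.
    have xO : x \notin O by rewrite /O in_setI [x \in out_nbhd _ _]inE (negbTE (irr x)) andbF.
    rewrite cardsU1 xO /= add1n.
    have rxO : r x = #|O| by [].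
    move: ryx; rewrite rxO => h1 h2; have := leq_trans h2 h1; by rewrite ltnn.
  have c2 : #|[set y in WA | beats y x]| + #|WA :&: out_nbhd beats x| = p.
    rewrite /p -(cardsID (out_nbhd beats x) WA) addnC; congr (_ + _).
    apply: eq_card => y; rewrite !inE.
    case yWA: (y \in W); case yA: (beats v y); rewrite ?andbF //=.
    have yx : y != x.
      apply/negP => /eqP e; subst y; apply: (ABx x); last exact: xWB.
      by rewrite in_setI yWA inE yA.
    rewrite andbT; case byx: (beats y x).
      by rewrite (negbTE (asym byx)).
    by rewrite (tot yx (negbT byx)).
  have c4 : #|I| + r x <= m - 1.
    rewrite -card_disjU; last first.
      move=> z; rewrite !inE => /andP [_ bzx]; apply/negP => /andP [_ bxz].
      by move: (asym bzx); rewrite bxz.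
    have : #|I :|: O| <= #|WB :\ x|.
      apply: subset_leq_card; apply/subsetP => z; rewrite !inE => /orP [] /andP [zW bz];
        rewrite zW andbT; apply/negP => /eqP e; subst z; by rewrite (negbTE (irr x)) in bz.
    have := cardsD1 x WB; rewrite xWB -/m /= add1n => h1 h2; rewrite h1 subn1 /=; exact: h2.
  have c5 := cB x xWB.
  rewrite -/WA -/WB -/I in c5.
  have m0 : 0 < m by apply/card_gt0P; exists x.
  exact: (ar_hMA m0 c1 c2 c4 c5 cLO).
have [Z2 [f2 [sZ2 cZ2 P2]]] := @gm r _ M WA erefl dMA hMA.
have : 0 < #|WA :\: Z2| by rewrite cardsDS // cZ2 cM -/p; lia.
case/card_gt0P => a0; rewrite in_setD => /andP [a0Z2 a0WA].
have bva0 : beats v a0 by have := WAA _ a0WA; rewrite inE.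
have P3 := pairing2 bva0.
set R := WA :\: (a0 |: Z2).
set j := N + t - m - 1.
have cR : #|R| = 2 * j.
  rewrite cardsDS; last by rewrite subUset sub1set a0WA sZ2.
  rewrite cardsU1 a0Z2 cZ2 cM -/p /=; rewrite add1n -add1n.
  by apply: ar_R => //; rewrite -cn.
have [Q [f4 [sQ P4]]] := even_pairing cR.
have RWA x : x \in R -> x \in WA by rewrite in_setD => /andP [].
have WAnB x : x \in WA -> x \notin WB by move=> h; apply/negP => h2; exact: ABx h h2.
have WBnA x : x \in WB -> x \notin WA by move=> h; apply/negP => h2; exact: ABx h2 h.
have vnWA : v \notin WA by rewrite in_setI (negbTE vA) andbF.
have vnWB : v \notin WB by rewrite in_setI (negbTE vB) andbF.
have d1 : forall x, x \in S :|: L -> x \notin Z2 :|: M.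
  move=> x; rewrite in_setU inS inL => /orP [] h; rewrite in_setU inM negb_or.
    rewrite (introN idP (fun z => d12 x h z)) andbT; apply/negP => /(subsetP sZ2) => z.
    by move: (WBnA _ (SWB _ h)); rewrite z.
  rewrite (introN idP (fun z => d23 x z h)) andbT; apply/negP => /(subsetP sZ2) => z.
  by move: (WBnA _ (LWB _ h)); rewrite z.
have d2 : forall x, x \in [set v; a0] -> x \notin R.
  move=> x; rewrite in_set2 => /orP [] /eqP ->.
    by apply/negP => /RWA h; move: vnWA; rewrite h.
  by rewrite in_setD in_setU1 eq_refl.
have d3 : forall x, x \in (S :|: L) :|: (Z2 :|: M) -> x \notin [set v; a0] :|: R.
  move=> x; rewrite !in_setU inS inL inM => h.
  have [xZ|xB] : x \in Z2 \/ x \in WB.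
    move: h => /orP [/orP [h|h]|/orP [h|h]]; [right; exact: SWB | right; exact: LWB | by left | right; exact: MWB].
    rewrite !in_set1 !negb_or; apply/andP; split; first (apply/andP; split).
    + by apply/negP => /eqP e; move: vnWA; rewrite -e (subsetP sZ2).
    + by apply/negP => /eqP e; move: a0Z2; rewrite -e xZ.
    + by rewrite in_setD in_setU1 xZ orbT.
  rewrite !in_set1 !negb_or; apply/andP; split; first (apply/andP; split).
  + by apply/negP => /eqP e; move: vnWB; rewrite -e xB.
  + by apply/negP => /eqP e; move: (WBnA _ xB); rewrite e a0WA.
  + by apply/negP => /RWA h'; move: (WBnA _ xB); rewrite h'.
have U := pairingU (pairingU P1 P2 d1) (pairingU P3 P4 d2) d3.
set U0 := (S :|: L :|: (Z2 :|: M)) :|: ([set v; a0] :|: R) in U.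
set W' := (S :|: Z2) :|: ([set v] :|: Q) in U.
set f := (fun x => if x \in S :|: Z2 then _ else _) in U.
have cU : #|U0| = 2 * N.
  case: P1 => _ _ _ c1; case: P2 => _ _ _ c2; case: P4 => _ _ _ c4.
  rewrite /U0 (card_disjU d3) (card_disjU d1) (card_disjU d2) c1 c2 c4 cards2 (beats_neq bva0) cS cZ2 cM.
  apply: (ar_U (p := p)) => //; first by rewrite -cn cN.
  by apply/eqP; rewrite -(eqn_pmul2l (isT : 0 < 2)) -c4 cR.
have UW : U0 \subset W.
  apply/subsetP => x; rewrite !in_setU inS inL inM !in_set1 => /orP [/orP [/orP [h|h]|/orP [h|h]]|/orP [/orP [h|h]|h]].
  - exact: WBW (SWB _ h).
  - exact: WBW (LWB _ h).
  - exact: WAW (subsetP sZ2 _ h).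
  - exact: WBW (MWB _ h).
  - by rewrite (eqP h).
  - by rewrite (eqP h); exact: WAW.
  - exact: WAW (RWA _ h).
have eU : U0 = W by apply/eqP; rewrite eqEcard UW cU cN /=.
rewrite eU in U.
exists W', f; split => //.
case: U => sW' _ _ cW'.
have cW'N : #|W'| = N by apply/eqP; rewrite -(eqn_pmul2l (isT : 0 < 2)) -cW' cN.
split.
- by rewrite !in_setU in_set1 eq_refl !orbT.
- exact: cW'N.
- case: (posnP k) => [k0|kpos]; first by left.
  right.
  have N2 : 2 <= N by rewrite /N -{1}(expn1 2) leq_exp2l.
  have sub : W' \subset (S :|: [set v]) :|: (W' :&: A).
    apply/subsetP => x xW'; rewrite !in_setU in_setI xW' /=.
    move: (xW'); rewrite !in_setU => /orP [/orP [h|h]|/orP [h|h]].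
    - by rewrite h.
    - by rewrite (WAA _ (subsetP sZ2 _ h)) !orbT.
    - by rewrite h orbT.
    - by rewrite (WAA _ (RWA _ (subsetP sQ _ h))) !orbT.
  have c1 := subset_leq_card sub.
  have c2 : #|(S :|: [set v]) :|: (W' :&: A)| <= #|S :|: [set v]| + #|W' :&: A| := leq_card_setU _ _.
  have c5 : #|S :|: [set v]| <= #|S| + #|[set v]| := leq_card_setU _ _.
  rewrite cards1 cS in c5.
  rewrite cW'N; apply: (ar_I (p := p) (m := m) (t := t) (N := N)).
  + by rewrite -cn cN.
  + by rewrite -cN.
  + by [].
  + exact: N2.
  rewrite -{1}cW'N; apply: (leq_trans c1); apply: (leq_trans c2); by rewrite leq_add2r.
have upS y b : b \in s1 -> y \in WB -> beats y b -> y \in s1.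
  move=> bs yB byb; move: (yB); rewrite mWB => /or3P [//|h|h]; exfalso.
    by move: (asym (b12 _ _ bs h)); rewrite byb.
  by move: (asym (b13 _ _ bs h)); rewrite byb.
have W'S b : b \in W' :&: B -> b \in s1.
  rewrite in_setI => /andP [bW' bB]; move: bW'; rewrite !in_setU => /orP [/orP [h|h]|/orP [h|h]].
  - by rewrite -inS.
  - by move: (AB (WAA _ (subsetP sZ2 _ h))); rewrite bB.
  - by move: h; rewrite in_set1 => /eqP e; move: vB; rewrite -e bB.
  - by move: (AB (WAA _ (RWA _ (subsetP sQ _ h)))); rewrite bB.
move=> b bW'B.
have bs1 := W'S b bW'B.
have bWB := SWB _ bs1.
apply: (leq_trans _ (leq_trans (cB b bWB) _)).
  apply: subset_leq_card; apply/subsetP => y; rewrite !in_setI => /andP [/andP [yW' yA] yo].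
  by rewrite (subsetP sW' _ yW') yA yo.
apply: subset_leq_card; apply/subsetP => y; rewrite !in_setI => /andP [/andP [yW yB] yi].
have yWB : y \in WB by rewrite in_setI yW yB.
have ys1 : y \in s1 by apply: (upS y b bs1 yWB); move: yi; rewrite inE.
by rewrite yB yi !in_setU inS ys1.
Qed.

Lemma main k : forall W, Inv k W ->
  exists s, perm_eq s (enum W) /\ iter k (knockout_round beats) s = [:: v].
Proof.
elim: k => [|k IH] W HI.
  case: HI => vW cW _ _; exists [:: v]; split => //.
  have -> : W = [set v].
    by apply/eqP; rewrite eq_sym eqEcard sub1set vW cards1 cW.
  by rewrite enum_set1.
have [W' [f [P I']]] := round HI.
have [s' [ps' hs']] := IH W' I'.
have [p1 p2] := pairing_seq P ps'.
by eexists; split; first exact: p1; rewrite iterSr p2.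
Qed.



Lemma cond_from b : b \in B -> outdeg beats b <= #|B| ->
  #|A :&: out_nbhd beats b| <= #|B :&: in_nbhd beats b|.
Proof.
move=> bB h.
have c1 : #|v |: ((B :&: out_nbhd beats b) :|: (A :&: out_nbhd beats b))| <= outdeg beats b.
  apply: subset_leq_card; apply/subsetP => x; rewrite !inE => /orP [/eqP ->|/orP [] /andP [] //].
  by move: bB; rewrite inE.
rewrite cardsU1 card_disjU in c1; last first.
  by move=> x; rewrite !inE => /andP [xB _]; apply/negP => /andP [xA _]; by move: (asym xA); rewrite xB.
have c2 : #|B| <= #|b |: ((B :&: in_nbhd beats b) :|: (B :&: out_nbhd beats b))|.
  apply: subset_leq_card; apply/subsetP => x xB; rewrite !inE; move: (xB); rewrite inE => -> /=.
  case: (eqVneq x b) => //= ne; case bx: (beats b x); rewrite ?orbT //.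
  by rewrite (tot _ (negbT bx)) // eq_sym.
have c3 : #|(B :&: in_nbhd beats b) :|: (B :&: out_nbhd beats b)| <= #|B :&: in_nbhd beats b| + #|B :&: out_nbhd beats b| := leq_card_setU _ _.
rewrite cardsU1 in c2.
have : v \notin B :&: out_nbhd beats b :|: A :&: out_nbhd beats b.
  by rewrite !inE (negbTE (irr v)) /= ?andbF.
move=> hv; rewrite hv in c1.
move: c1 c2 c3 h; case: (b \notin _) => /=; lia.
Qed.

End Main.

Theorem theorem5 (T : finType) (beats : rel T) (k : nat) (vstar : T) :
  tournament beats ->
  #|T| = 2 ^ k ->
  neighbor_acyclic beats vstar ->
  (forall u : T, ~ is_source beats u) ->
  (* (1) |A| >= |V(D)|/3 *)
  #|T| <= 3 * #|out_nbhd beats vstar| ->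
  (* (2) out b <= (|B|/|A|) out vstar, cleared of the denominator |A| *)
  (forall b, b \in in_nbhd beats vstar ->
     outdeg beats b * #|out_nbhd beats vstar|
       <= #|in_nbhd beats vstar| * outdeg beats vstar) ->
  yes_instance beats k vstar.
Proof.
move=> Ht cT [acI acO] _ c1 c2.
have trB : forall x y z, x \in in_nbhd beats vstar -> y \in in_nbhd beats vstar ->
    z \in in_nbhd beats vstar -> beats x y -> beats y z -> beats x z.
  move=> x y z xB yB zB bxy byz; case: (eqVneq x z) => [exz|ne].
    by subst; move: (asym Ht byz); rewrite bxy.
  apply/negPn/negP => nxz; have bzx := tot Ht ne nxz.
  have := acI x [:: y; z] xB; rewrite /= yB zB /= => /(_ isT).
  by rewrite /cycle /= bxy byz bzx.
have pos : 0 < #|out_nbhd beats vstar|.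
  move: c1; rewrite cT; have := expn_gt0 2 k; lia.
have I : Inv beats vstar k [set: T].
  split.
  - by rewrite inE.
  - by rewrite cardsT.
  - by right; rewrite cardsT setTI.
  - move=> b; rewrite setTI => bB; rewrite !setTI.
    apply: (cond_from Ht bB).
    by move: (c2 b bB); rewrite /outdeg leq_pmul2r.
have [s [ps hs]] := main Ht trB I.
exists s; split => //.
apply: (perm_trans ps); apply: uniq_perm; rewrite ?enum_uniq // => x.
by rewrite !mem_enum inE.
Qed.
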